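(* Let $n\geqslant 1$ be an integer and let $I_\nu$ denote the modified Bessel function of the first kind of order $\nu$. Then for every $\kappa>0$, \[ J(\kappa):=2 I_{n-1}(\kappa)I_{n+1}(\kappa) -I_n(\kappa)^2+ \frac{4 n }{\kappa}I_{n-1}(\kappa )I_n(\kappa) - I_{n-1}(\kappa)^2\geqslant 0. \]
   Context: For $\nu\in\mathbb Z$ and $\zeta\in\mathbb C$, $I_\nu(\zeta)=\sum_{k\geqslant 0}\frac{(\zeta/2)^{2k+\nu}}{k!\,\Gamma(k+\nu+1)}$ (with $I_{-\nu}=I_\nu$ for integer $\nu$). *)

(* Defs.v *)
From Stdlib Require Import Reals.
From Coquelicot Require Import Coquelicot.
Open Scope R_scope.

(* Modified Bessel function of the first kind of integer order nu >= 0: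
   I_nu(x) = sum_{k>=0} (x/2)^(2k+nu) / (k! * Gamma(k+nu+1)),
   with Gamma(k+nu+1) = (k+nu)! . *)
Definition bessel_I_term (nu : nat) (x : R) (k : nat) : R :=
  (x / 2) ^ (2 * k + nu) / (INR (Factorial.fact k) * INR (Factorial.fact (k + nu))).

Definition bessel_I (nu : nat) (x : R) : R := Series (bessel_I_term nu x).

(* Main.v *)
Require Import Defs.
From Stdlib Require Import Reals.
From Coquelicot Require Import Coquelicot.
From Stdlib Require Import Lra Lia Psatz.
Open Scope R_scope.

Lemma fact_pos_R (k : nat) : 0 < INR (Factorial.fact k).
Proof. apply lt_0_INR, Factorial.lt_O_fact. Qed.

Lemma fact_ge1_R (k : nat) : 1 <= INR (Factorial.fact k).
Proof. apply (le_INR 1), Factorial.lt_O_fact. Qed.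

Lemma factS n : Factorial.fact (S n) = (S n * Factorial.fact n)%nat.
Proof. reflexivity. Qed.

Lemma t_pos nu x k : 0 < x -> 0 < bessel_I_term nu x k.
Proof.
  intros hx. unfold bessel_I_term. apply Rdiv_lt_0_compat.
  apply pow_lt; lra. apply Rmult_lt_0_compat; apply fact_pos_R.
Qed.

Lemma tS_k nu x k : bessel_I_term nu x (S k) =
  bessel_I_term nu x k * ((x/2)^2 / (INR (S k) * INR (S (k + nu)))).
Proof.
  unfold bessel_I_term.
  replace (2 * S k + nu)%nat with (S (S (2 * k + nu))) by lia.
  replace (S k + nu)%nat with (S (k + nu)) by lia.
  rewrite !factS, !mult_INR.
  pose proof (fact_pos_R k). pose proof (fact_pos_R (k+nu)).
  assert (0 < INR (S k)) by (apply lt_0_INR; lia).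
  assert (0 < INR (S (k+nu))) by (apply lt_0_INR; lia).
  simpl pow. field. repeat split; lra.
Qed.

Lemma tS_nu nu x k : bessel_I_term (S nu) x k =
  bessel_I_term nu x k * ((x/2) / INR (S (k + nu))).
Proof.
  unfold bessel_I_term.
  replace (2 * k + S nu)%nat with (S (2 * k + nu)) by lia.
  replace (k + S nu)%nat with (S (k + nu)) by lia.
  rewrite !factS, !mult_INR.
  pose proof (fact_pos_R k). pose proof (fact_pos_R (k+nu)).
  assert (0 < INR (S (k+nu))) by (apply lt_0_INR; lia).
  simpl pow. field. repeat split; lra.
Qed.

Lemma ex_t nu x : 0 < x -> ex_series (bessel_I_term nu x).
Proof.
  intros hx.
  assert (He : ex_series (fun k => scal ((x/2)^nu) (scal (pow_n ((x/2)^2) k) (/ INR (Factorial.fact k))))).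
  { apply (@ex_series_scal_l R_AbsRing R_CompleteNormedModule).
    pose proof (is_exp_Reals ((x/2)^2)) as H.
    unfold is_pseries in H. eexists. exact H. }
  refine (@ex_series_le R_AbsRing R_CompleteNormedModule _ _ _ He). intros k.
  change (norm (bessel_I_term nu x k)) with (Rabs (bessel_I_term nu x k)).
  rewrite Rabs_pos_eq by (apply Rlt_le, t_pos; auto).
  change (scal ?a ?b) with (a * b). change (scal ?a ?b) with (a * b). replace (pow_n ((x/2)^2) k) with (((x/2)^2)^k) by (symmetry; apply pow_n_pow).
  unfold bessel_I_term.
  pose proof (fact_pos_R k). pose proof (fact_ge1_R (k+nu)).
  assert (0 < (x/2)^(2*k+nu)) by (apply pow_lt; lra).
  replace ((x / 2) ^ nu * (((x / 2) ^ 2) ^ k * / INR (Factorial.fact k))) with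
    ((x/2)^(2*k+nu) / INR (Factorial.fact k)) by (rewrite pow_add, pow_mult; field; lra).
  unfold Rdiv. apply Rmult_le_compat_l; [lra|].
  apply Rinv_le_contravar; nra.
Qed.

Lemma Series_zero : Series (fun _ => 0) = 0.
Proof.
  rewrite (Series_ext (fun _ => 0) (fun n => 0 * 0)) by (intros; ring).
  rewrite (Series_scal_l 0 (fun _ => 0)). ring.
Qed.

Lemma I_nonneg nu x : 0 < x -> 0 <= bessel_I nu x.
Proof.
  intros hx. rewrite <- Series_zero. unfold bessel_I.
  apply Series_le; [|apply ex_t; auto].
  intros k. pose proof (t_pos nu x k hx). lra.
Qed.

Lemma term_ineq m x k : 0 < x ->
  2 * bessel_I_term (S m) x k <= bessel_I_term m x k + bessel_I_term m x (S k).
Proof.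
  intros hx. rewrite tS_nu, tS_k.
  pose proof (t_pos m x k hx) as hT.
  set (T := bessel_I_term m x k) in *.
  assert (hp : 0 < INR (S k)) by (apply lt_0_INR; lia).
  assert (hpq : INR (S k) <= INR (S (k + m))) by (apply le_INR; lia).
  set (p := INR (S k)) in *. set (q := INR (S (k + m))) in *.
  set (a := x / 2).
  assert (E : T + T * (a ^ 2 / (p * q)) - 2 * (T * (a / q)) =
              T * (((a - p)^2 + p * (q - p)) / (p * q))) by (field; lra).
  assert (0 <= T * (((a - p)^2 + p * (q - p)) / (p * q))).
  { apply Rmult_le_pos; [lra|]. unfold Rdiv. apply Rmult_le_pos; [apply Rplus_le_le_0_compat; [apply pow2_ge_0 | apply Rmult_le_pos; lra] | left; apply Rinv_0_lt_compat; apply Rmult_lt_0_compat; lra]. }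
  lra.
Qed.

Lemma I_le m x : 0 < x -> bessel_I (S m) x <= bessel_I m x.
Proof.
  intros hx. unfold bessel_I.
  pose proof (ex_t m x hx) as h0.
  pose proof (proj1 (ex_series_incr_1 _) h0) as h1.
  assert (h2 : ex_series (fun k => bessel_I_term m x k + bessel_I_term m x (S k)))
    by exact (@ex_series_plus R_AbsRing R_NormedModule _ _ h0 h1).
  assert (H : Series (fun k => 2 * bessel_I_term (S m) x k) <=
              Series (fun k => bessel_I_term m x k + bessel_I_term m x (S k))).
  { apply Series_le; auto. intros k. split.
    - pose proof (t_pos (S m) x k hx); lra.
    - apply term_ineq; auto. }
  rewrite Series_scal_l, Series_plus in H by auto.
  rewrite (Series_incr_1 _ h0) in H.
  pose proof (t_pos m x 0 hx).
  rewrite (Series_incr_1 _ h0). lra.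
Qed.

Lemma I_rec m x : 0 < x ->
  bessel_I m x - bessel_I (S (S m)) x = (2 * INR (S m) / x) * bessel_I (S m) x.
Proof.
  intros hx. unfold bessel_I.
  pose proof (ex_t m x hx) as h0.
  pose proof (proj1 (ex_series_incr_1 _) h0) as h1.
  pose proof (ex_t (S (S m)) x hx) as h2.
  pose proof (ex_t (S m) x hx) as h3.
  rewrite (Series_incr_1 _ h0), (Series_incr_1 _ h3).
  rewrite Rmult_plus_distr_l, <- Series_scal_l.
  replace (bessel_I_term m x 0 + Series (fun k => bessel_I_term m x (S k)) -
           Series (bessel_I_term (S (S m)) x))
    with (bessel_I_term m x 0 + Series (fun k => bessel_I_term m x (S k) - bessel_I_term (S (S m)) x k))
    by (rewrite Series_minus by auto; ring).
  f_equal.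
  - rewrite (tS_nu m x 0). unfold bessel_I_term.
    pose proof (fact_pos_R (0 + m)). rewrite !S_INR, !plus_INR. simpl (INR 0).
    pose proof (pos_INR m). change (Factorial.fact 0) with 1%nat. simpl (INR 1). field. repeat split; lra.
  - apply Series_ext. intros k.
    rewrite (tS_k (S m) x k), (tS_nu (S m) x k), (tS_nu m x k), (tS_k m x k).
    rewrite !S_INR, !plus_INR, !S_INR.
    pose proof (pos_INR m). pose proof (pos_INR k).
    field. repeat split; lra.
Qed.

Theorem lemmaA1 (n : nat) (hn : (1 <= n)%nat) (kappa : R) (hk : 0 < kappa) :
  0 <= 2 * bessel_I (n - 1) kappa * bessel_I (n + 1) kappa
       - (bessel_I n kappa) ^ 2
       + 4 * INR n / kappa * bessel_I (n - 1) kappa * bessel_I n kappa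
       - (bessel_I (n - 1) kappa) ^ 2.
Proof.
  destruct n as [|m]; [lia|].
  replace (S m - 1)%nat with m by lia.
  replace (S m + 1)%nat with (S (S m)) by lia.
  pose proof (I_rec m kappa hk) as Hr.
  pose proof (I_le m kappa hk) as Hl.
  pose proof (I_nonneg (S m) kappa hk) as Hp.
  set (A := bessel_I m kappa) in *.
  set (B := bessel_I (S m) kappa) in *.
  set (C := bessel_I (S (S m)) kappa) in *.
  replace (4 * INR (S m) / kappa * A * B) with (2 * A * (2 * INR (S m) / kappa * B))
    by (field; lra).
  rewrite <- Hr. nra.
Qed.
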